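(* Let $G$ be a mean-payoff game with partial-observation and $G'$ its limited-observation counterpart (defined below). Eve has a winning observation-based strategy in $G$ if and only if she has a winning observation-based strategy in $G'$.
   Context: An MPG with partial-observation is a tuple $G=\langle Q,q_I,\Sigma,\Delta,w,Obs\rangle$: $Q$ finite set of states, $q_I\in Q$, $\Sigma$ finite set of actions, $\Delta\subseteq Q\times\Sigma\times Q$ total, $w:\Delta\to\mathbb{Z}$, $Obs$ a partition of $Q$. $\mathrm{post}_\sigma(s)=\{q':\exists q\in s,(q,\sigma,q')\in\Delta\}$. Plays are infinite abstract paths $o_0\sigma_0o_1\ldots$ ($o_i\in Obs$, with some $\sigma_i$-transition from a state of $o_i$ to a state of $o_{i+1}$) starting at the observation containing the initial state; $\gamma(\psi)$ is the set of concrete paths $q_0\sigma_0q_1\ldots$ with $q_i\in o_i$ and $(q_i,\sigma_i,q_{i+1})\in\Delta$; $\underline{MP}(\pi)=\liminf_n\frac1n\sum_{i<n}w(q_i,\sigma_i,q_{i+1})$. An observation-based strategy for Eve maps finite play prefixes ending in an observation to actions; a play $o_0\sigma_0\ldots$ is consistent with $\lambda$ if $\sigma_i=\lambda(o_0\sigma_0\ldots o_i)$; $\lambda$ is winning if every consistent play $\psi$ satisfies $\underline{MP}(\pi)\ge0$ for all $\pi\in\gamma(\psi)$. The limited-observation counterpart of $G$ is $G'=\langle Q',q'_I,\Sigma,\Delta',w',Obs'\rangle$ with $Q'=\{(q,K)\in Q\times2^Q: q\in K,\ K\subseteq o\text{ for some }o\in Obs\}$, $q'_I=(q_I,\{q_I\})$,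 $Obs'=\{\{(q,K):q\in K\}: \emptyset\ne K\subseteq o\text{ for some }o\in Obs\}$, $\Delta'$ consisting of the triples $((q,K),\sigma,(q',K'))$ with $(q,\sigma,q')\in\Delta$ and $K'=\mathrm{post}_\sigma(K)\cap o$ for some $o\in Obs$, and $w'((q,K),\sigma,(q',K'))=w(q,\sigma,q')$. *)

(* Defs.v *)
From HB Require Import structures.
From mathcomp Require Import all_boot all_order all_algebra.
From mathcomp Require boolp classical_sets reals topology sequences
  Rstruct Rstruct_topology.
From mathcomp Require Import constructive_ereal Rstruct.
Set Implicit Arguments. Unset Strict Implicit. Unset Printing Implicit Defensive.
Import Order.TTheory GRing.Theory Num.Theory.
Local Open Scope ring_scope.

(* A mean-payoff game with partial observation is given by
   states Q, actions Sig (finite types), initial state qI,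
   transition relation delta (as a boolean predicate on Q x Sig x Q),
   weights w (only relevant on delta) and a family of observations Obs. *)

Section MPG.
Variables (Q Sig : finType) (qI : Q) (delta : Q -> Sig -> Q -> bool)
  (w : Q -> Sig -> Q -> int) (Obs : {set {set Q}}).

Definition total_rel : Prop := forall q s, exists q', delta q s q'.

Definition obs_partition : Prop := partition Obs [set: Q].

Definition post (s : Sig) (K : {set Q}) : {set Q} :=
  [set q' | [exists q in K, delta q s q']].

Definition init_obs : {set Q} := pblock Obs qI.

Definition is_play (o : nat -> {set Q}) (s : nat -> Sig) : Prop :=
  o 0%N = init_obs /\
  forall i, o i \in Obs /\
    exists q q', [/\ q \in o i, q' \in o i.+1 & delta q (s i) q'].

(* observation-based strategies: a finite prefix o_0 s_0 ... o_{i-1} s_{i-1} o_i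
   is represented as the list of pairs (o_j, s_j), j < i, and the last
   observation o_i *)
Definition strategy := seq ({set Q} * Sig) -> {set Q} -> Sig.

Definition prefix (o : nat -> {set Q}) (s : nat -> Sig) (i : nat) :=
  [seq (o j, s j) | j <- iota 0 i].

Definition consistent (lam : strategy) (o : nat -> {set Q}) (s : nat -> Sig) :=
  forall i, s i = lam (prefix o s i) (o i).

Definition concrete (o : nat -> {set Q}) (s : nat -> Sig) (q : nat -> Q) : Prop :=
  q 0%N = qI /\ forall i, q i \in o i /\ delta (q i) (s i) (q i.+1).

Definition lower_MP (s : nat -> Sig) (q : nat -> Q) : \bar Rdefinitions.R :=
  sequences.limn_einf (fun n : nat =>
    (((\sum_(i < n) w (q i) (s i) (q i.+1))%:~R / n%:R : Rdefinitions.R)%:E)).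

Definition winning (lam : strategy) : Prop :=
  forall o s, is_play o s -> consistent lam o s ->
  forall q, concrete o s q -> (0 <= lower_MP s q)%E.

Definition eve_wins : Prop := exists lam : strategy, winning lam.

End MPG.

Section Limited.
Variables (Q Sig : finType) (qI : Q) (delta : Q -> Sig -> Q -> bool)
  (w : Q -> Sig -> Q -> int) (Obs : {set {set Q}}).

Definition lstate_pred (x : Q * {set Q}) : bool :=
  (x.1 \in x.2) && [exists o in Obs, x.2 \subset o].

Definition LState : finType := {x : Q * {set Q} | lstate_pred x}.

Lemma init_lstate_ok : obs_partition Obs -> lstate_pred (qI, [set qI]).
Proof.
move=> /and3P [/eqP Hcov _ _].
have Hq : qI \in cover Obs by rewrite Hcov inE.
rewrite /lstate_pred /= set11 /=; apply/existsP; exists (pblock Obs qI).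
by rewrite pblock_mem //= sub1set mem_pblock.
Qed.

Definition L_init (HP : obs_partition Obs) : LState :=
  exist _ (qI, [set qI]) (init_lstate_ok HP).

Definition L_Obs : {set {set LState}} :=
  [set [set x : LState | (val x).2 == K] | K in
     [set K : {set Q} | (K != set0) && [exists o in Obs, K \subset o]]].

Definition L_delta (x : LState) (s : Sig) (y : LState) : bool :=
  delta (val x).1 s (val y).1 &&
  [exists o in Obs, (val y).2 == post delta s (val x).2 :&: o].

Definition L_w (x : LState) (s : Sig) (y : LState) : int :=
  w (val x).1 s (val y).1.

End Limited.

(* Main.v *)
Require Import Defs.
From mathcomp Require Import all_boot all_order all_algebra.
Set Implicit Arguments. Unset Strict Implicit. Unset Printing Implicit Defensive.

Lemma cover_setT (Q : finType) (Obs : {set {set Q}}) :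
  obs_partition Obs -> cover Obs = setT.
Proof. by case/and3P => /eqP. Qed.

Lemma triv_of (Q : finType) (Obs : {set {set Q}}) :
  obs_partition Obs -> trivIset Obs.
Proof. by case/and3P. Qed.

Fixpoint Kseq (Q Sig : finType) (delta : Q -> Sig -> Q -> bool) (qI : Q)
  (o : nat -> {set Q}) (s : nat -> Sig) (n : nat) : {set Q} :=
  match n with
  | 0 => [set qI]
  | n'.+1 => post delta (s n') (Kseq delta qI o s n') :&: o n
  end.

Lemma eq_Kseq (Q Sig : finType) (delta : Q -> Sig -> Q -> bool) (qI : Q)
  o o' s s' n :
  (forall j, j <= n -> o j = o' j) -> (forall j, j < n -> s j = s' j) ->
  forall j, j <= n -> Kseq delta qI o s j = Kseq delta qI o' s' j.
Proof.
move=> Ho Hs; elim=> [//|j IH] Hj /=.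
by rewrite IH ?(ltnW Hj) // Hs // Ho.
Qed.

Lemma nth_prefix_fst (Q Sig : finType) (o : nat -> {set Q}) (s : nat -> Sig) i j :
  j <= i -> nth (o i) (map fst (Defs.prefix o s i)) j = o j.
Proof.
rewrite leq_eqVlt => /orP[/eqP->|Hj].
  by rewrite nth_default // size_map size_map size_iota.
by rewrite /Defs.prefix -map_comp (nth_map 0) ?size_iota //= nth_iota.
Qed.

Lemma nth_prefix_snd (Q Sig : finType) (o : nat -> {set Q}) (s : nat -> Sig) i s0 j :
  j < i -> nth s0 (map snd (Defs.prefix o s i)) j = s j.
Proof.
by move=> Hj; rewrite /Defs.prefix -map_comp (nth_map 0) ?size_iota //= nth_iota.
Qed.

Theorem theorem13 (Q Sig : finType) (qI : Q) (delta : Q -> Sig -> Q -> bool)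
  (w : Q -> Sig -> Q -> int) (Obs : {set {set Q}})
  (Htot : total_rel delta) (HP : obs_partition Obs) :
  @eve_wins Q Sig qI delta w Obs <->
  @eve_wins (LState Obs) Sig (@L_init Q qI Obs HP)
    (@L_delta Q Sig delta Obs) (@L_w Q Sig w Obs) (@L_Obs Q Obs).
Proof.
have Hcov := cover_setT HP; have Htr := triv_of HP.
split.
- move=> [lam Hwin].
  pose proj (O' : {set LState Obs}) : {set Q} :=
    if [pick y in O'] is Some y then pblock Obs (val y).1 else set0.
  exists (fun l O' => lam (map (fun p => (proj p.1, p.2)) l) (proj O')).
  move=> O' s [HO0 Hpl] Hcons x [Hx0 Hx].
  pose q i := (val (x i)).1.
  pose o i := pblock Obs (q i).
  have Hproj : forall i, proj (O' i) = o i.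
    move=> i; have [HOi _] := Hpl i.
    case/imsetP: HOi => K; rewrite inE => /andP[_ /existsP[ob /andP[Hob HKob]]] HOK.
    have Hxi := (Hx i).1.
    rewrite /proj; case: pickP => [y Hy | H]; last by rewrite H in Hxi.
    rewrite HOK inE in Hy; rewrite HOK inE in Hxi.
    have Hy1 : (val y).1 \in K by move: (valP y) => /andP[H1 _]; rewrite -(eqP Hy).
    have Hx1 : q i \in K by move: (valP (x i)) => /andP[H1 _]; rewrite -(eqP Hxi).
    by rewrite /o (def_pblock Htr Hob (subsetP HKob _ Hy1))
               (def_pblock Htr Hob (subsetP HKob _ Hx1)).
  have := Hwin o s _ _ q _; apply.
  + split; first by rewrite /o /q Hx0.
    move=> i; split; first by rewrite /o pblock_mem // Hcov inE.
    exists (q i), (q i.+1); split.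
    * by rewrite /o mem_pblock Hcov inE.
    * by rewrite /o mem_pblock Hcov inE.
    * by case/andP: (Hx i).2.
  + move=> i; rewrite Hcons Hproj; congr lam.
    by rewrite /Defs.prefix -map_comp; apply: eq_map => j /=; rewrite Hproj.
  + split; first by rewrite /q Hx0.
    move=> i; split; first by rewrite /o mem_pblock Hcov inE.
    by case/andP: (Hx i).2.
- move=> [lam' Hwin].
  pose s0 : Sig := lam' [::] set0.
  pose OL (K : {set Q}) : {set LState Obs} := [set x : LState Obs | (val x).2 == K].
  pose lam (l : seq ({set Q} * Sig)) (oc : {set Q}) : Sig :=
    let ofn := fun j => nth oc (map fst l) j in
    let sf := fun j => nth s0 (map snd l) j in
    lam' [seq (OL (Kseq delta qI ofn sf j), sf j) | j <- iota 0 (size l)]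
         (OL (Kseq delta qI ofn sf (size l))).
  exists lam.
  move=> o s [Ho0 Hpl] Hcons q [Hq0 Hq].
  pose K := Kseq delta qI o s.
  have HqK : forall i, q i \in K i.
    elim=> [|i IH] /=; first by rewrite Hq0 inE.
    rewrite inE (Hq i.+1).1 andbT inE; apply/existsP; exists (q i).
    by rewrite IH (Hq i).2.
  have HKo : forall i, K i \subset o i.
    case=> [|i] /=; last by apply: subsetIr.
    by rewrite Ho0 sub1set /init_obs mem_pblock Hcov inE.
  have Hxp : forall i, lstate_pred Obs (q i, K i).
    move=> i; rewrite /lstate_pred /= HqK /=; apply/existsP; exists (o i).
    by rewrite (Hpl i).1 HKo.
  pose x i : LState Obs := exist _ (q i, K i) (Hxp i).
  pose O' i := OL (K i).
  have HxO : forall i, x i \in O' i by move=> i; rewrite inE.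
  have HOL : forall i, O' i \in L_Obs Obs.
    move=> i; apply/imsetP; exists (K i) => //; rewrite inE; apply/andP; split.
      by apply/set0Pn; exists (q i).
    by apply/existsP; exists (o i); rewrite (Hpl i).1 HKo.
  have Hdel : forall i, L_delta delta (x i) (s i) (x i.+1).
    move=> i; rewrite /L_delta /= (Hq i).2 /=; apply/existsP; exists (o i.+1).
    by rewrite (Hpl i.+1).1 eqxx.
  have Hx0 : x 0 = L_init qI HP by apply: val_inj; rewrite /= Hq0.
  have := Hwin O' s _ _ x _; apply.
  + split; last first.
      by move=> i; split; [exact: HOL | exists (x i), (x i.+1); split].
    rewrite /init_obs /pblock; case: pickP => [B /andP[HB HinB] | H]; last first.
      by move: (H (O' 0)); rewrite /= (HOL 0) -Hx0 HxO.
    case/imsetP: HB => K' _ HB; rewrite HB inE /= in HinB.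
    by rewrite HB /O' /OL /= -(eqP HinB).
  + move=> i; rewrite Hcons /lam size_map size_iota.
    have HK : forall j, j <= i ->
      Kseq delta qI (fun j => nth (o i) (map fst (Defs.prefix o s i)) j)
                    (fun j => nth s0 (map snd (Defs.prefix o s i)) j) j = K j.
      apply: eq_Kseq => j Hj; [exact: nth_prefix_fst | exact: nth_prefix_snd].
    congr lam'; last by rewrite HK.
    rewrite [in RHS]/Defs.prefix; apply/eq_in_map => j; rewrite mem_iota => /andP[_ Hj].
    congr pair; first by rewrite HK // ltnW.
    exact: nth_prefix_snd.
  + split; first exact: Hx0.
    by move=> i; split.
Qed.
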